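(* For every integer $m\ge2$, $\mathrm{disc}(4m+2,4)=2$.
   Context: For positive integers $n>k$, let $S_n$ be the set of permutations $\pi=(\pi_1,\dots,\pi_n)$ of $1,\dots,n$, with cyclic indexing $\pi_{n+i}=\pi_i$, and $s_i=\sum_{j=0}^{k-1}\pi_{i+j}$ for $i=1,\dots,n$. Define $\mathrm{disc}(\pi,k)=\max_{1\le i\le n}|s_i-\frac{k(n+1)}{2}|$ and $\mathrm{disc}(n,k)=\min_{\pi\in S_n}\mathrm{disc}(\pi,k)$. *)

(* Defs.v *)
From HB Require Import structures.
From mathcomp Require Import all_boot all_order all_algebra.
From mathcomp Require Import fingroup perm.
Set Implicit Arguments. Unset Strict Implicit. Unset Printing Implicit Defensive.
Import Order.TTheory GRing.Theory Num.Theory.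
Local Open Scope ring_scope.

Lemma cyc_proof n (i : 'I_n) (j : nat) : ((i + j) %% n < n)%N.
Proof. by apply: ltn_pmod; apply: leq_ltn_trans (leq0n i) (ltn_ord i). Qed.

Definition cyc n (i : 'I_n) (j : nat) : 'I_n := Ordinal (cyc_proof i j).

(* A permutation pi of 1..n is encoded by s : 'S_n via pi_(i+1) = s i + 1
   (positions and values shifted by one). *)
Definition pival n (s : 'S_n) (i : 'I_n) : nat := (s i).+1.

Definition window_sum n (k : nat) (s : 'S_n) (i : 'I_n) : nat :=
  \sum_(j < k) pival s (cyc i j).

Definition disc_perm n (k : nat) (s : 'S_n) : rat :=
  \big[Num.max/0]_(i < n)
     `| (window_sum k s i)%:R - (k * n.+1)%:R / 2%:R |.

Definition disc (n k : nat) : rat :=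
  disc_perm k (Order.arg_min (1%g : 'S_n) xpredT (disc_perm k)).

(* Main.v *)
Require Import Defs.
From mathcomp Require Import all_boot all_order all_algebra.
From mathcomp Require Import fingroup perm.
From mathcomp Require Import zify.
Import Order.TTheory GRing.Theory Num.Theory.

Section Core.
Variables (m : nat) (f : nat -> nat).
Hypothesis m2 : 2 <= m.
Let N := 4 * m + 2.
Hypothesis Hper : forall t, f (t + N) = f t.
Hypothesis Hinj : forall t d, 0 < d -> ~~ (N %| d) -> f (t + d) <> f t.
Hypothesis Hle : forall t, f t <= N.
Hypothesis H0 : f 0 = N.
Hypothesis HS : forall t, 8 * m + 5 <= f t + f (t+1) + f (t+2) + f (t+3) <= 8 * m + 7.

Lemma near t : f (t + 4) <= f t + 2 /\ f t <= f (t + 4) + 2.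
Proof.
have := HS t; have := HS (t+1).
rewrite -!addnA /= !addn1 !addn2 !addn3 !addn4. lia.
Qed.

Let g j := f (4 * j).

Lemma ginj a b : a < b -> b <= 2 * m -> g b <> g a.
Proof.
move=> ab bm; rewrite /g.
have -> : 4 * b = 4 * a + 4 * (b - a) by lia.
apply: Hinj; first lia.
apply/negP => /dvdnP [q Hq].
move: Hq; rewrite /N.
case: q => [|[|q]] /=; lia.
Qed.

Lemma gper : g (2 * m + 1) = g 0.
Proof.
rewrite /g.
have -> : 4 * (2 * m + 1) = (0 + N) + N by rewrite /N; lia.
by rewrite !Hper.
Qed.

Lemma ginj2 a b : 0 < a -> a < b -> b <= 2 * m + 1 -> g b <> g a.
Proof.
move=> a0 ab bm.
case: (ltngtP b (2 * m + 1)) => Hb; [by apply: ginj; lia| lia|].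
subst b; rewrite gper => H.
by apply: (ginj 0 a a0 ltac:(lia)).
Qed.

Lemma gnear j : g (j + 1) <= g j + 2 /\ g j <= g (j + 1) + 2.
Proof.
rewrite /g.
have -> : 4 * (j + 1) = 4 * j + 4 by lia.
exact: near.
Qed.

Lemma core : False.
Proof.
have g0 : g 0 = N by rewrite /g muln0.
have gl : forall j, g j <= N by move=> j; apply: Hle.
have d1 := gnear 0. rewrite add0n in d1.
have d2 := gnear (2 * m).
rewrite gper in d2.
have i10 := ginj (0) (1) isT ltac:(lia).
have i20 := ginj (0) (2 * m) ltac:(lia) ltac:(lia).
have i21 := ginj (1) (2 * m) ltac:(lia) ltac:(lia).
have gl1 := gl 1; have gl2 := gl (2 * m).
case: (ltngtP (g 1) (g (2 * m))) => Hc; last by lia.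
-
  have base : g 1 + 2 = N /\ g (2 * m) + 1 = N by lia.
  have IH : forall k, 1 <= k <= m -> forall j, 1 <= j <= k ->
      g j + 2 * j = N /\ g (2 * m + 1 - j) + 2 * j = N + 1.
    elim=> [|k IHk] // Hk j Hj.
    case: (ltngtP j k.+1) => Hjk; [by apply: IHk; lia| by lia|].
    subst j.
    case: (posnP k) => [->|kpos].
      have E : 2 * m + 1 - 1 = 2 * m by lia.
      by rewrite E; lia.
    have [A B] := IHk ltac:(lia) k ltac:(lia).
    have Hprev : (1 < k /\ g (2 * m + 2 - k) + 2 * k = N + 3) \/ (k = 1 /\ g (2 * m + 2 - k) = N).
      case: (ltngtP k 1) => Hk1; [lia| |].
      + have [_ C] := IHk ltac:(lia) (k - 1) ltac:(lia).
        move: C; have -> : 2 * m + 1 - (k - 1) = 2 * m + 2 - k by lia.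
        move=> C; left; lia.
      + subst k; have -> : 2 * m + 2 - 1 = 2 * m + 1 by lia.
        by rewrite gper; right; lia.
    have Hkm1 : g (k - 1) + 2 * k = N + 2.
      case: (ltngtP k 1) => Hk1; [lia| |].
      + have [C _] := IHk ltac:(lia) (k - 1) ltac:(lia). lia.
      + subst k; rewrite /= g0; lia.
    have E1 : 2 * m + 1 - k.+1 = 2 * m - k by lia.
    rewrite E1.
    have n1 := gnear k. rewrite addn1 in n1.
    have n2 := gnear (2 * m - k).
    have E2 : 2 * m - k + 1 = 2 * m + 1 - k by lia.
    rewrite E2 in n2.
    have j1 := ginj (k) (2 * m - k) ltac:(clear -Hk kpos m2; lia) ltac:(clear -Hk kpos m2; lia).
    have j2 := ginj (k - 1) (2 * m - k) ltac:(clear -Hk kpos m2; lia) ltac:(clear -Hk kpos m2; lia).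
    have j3 : k = 1 \/ g (2 * m - k) <> g (2 * m + 2 - k).
      case: (ltngtP k 1) => Hk1; [lia| |by left].
      right=> Hx; apply: (ginj (2 * m - k) (2 * m + 2 - k) ltac:(clear -Hk kpos m2 Hk1; lia) ltac:(clear -Hk kpos m2 Hk1; lia)).
      by rewrite Hx.
    have j4 := ginj (2 * m - k) (2 * m + 1 - k) ltac:(clear -Hk kpos m2; lia) ltac:(clear -Hk kpos m2; lia).
    have j5 := ginj (k.+1) (2 * m - k) ltac:(clear -Hk kpos m2; lia) ltac:(clear -Hk kpos m2; lia).
    have j6 := ginj (k.+1) (2 * m + 1 - k) ltac:(clear -Hk kpos m2; lia) ltac:(clear -Hk kpos m2; lia).
    have j7 := ginj (k - 1) (k.+1) ltac:(clear -Hk kpos m2; lia) ltac:(clear -Hk kpos m2; lia).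
    have j8 := ginj (k) (k.+1) ltac:(clear -Hk kpos m2; lia) ltac:(clear -Hk kpos m2; lia).
    have l1 := gl k.+1. have l2 := gl (2 * m - k).
    move: n1 n2 j1 j2 j3 j4 j5 j6 j7 j8 l1 l2 A B Hprev Hkm1.
    move: (g k.+1) (g (2 * m - k)) (g k) (g (k - 1)) (g (2 * m + 1 - k)) (g (2 * m + 2 - k)).
    rewrite /N; clear -kpos Hk.
    move=> X Y a b c d n1 n2 j1 j2 j3 j4 j5 j6 j7 j8 l1 l2 A B Hprev Hkm1.
    have HY : Y + 2 * k + 1 = 4 * m + 2.
      clear -n2 j1 j2 j3 j4 l2 A B Hprev Hkm1 kpos Hk. lia.
    clear -HY n1 j5 j6 j7 j8 l1 A B Hkm1 kpos Hk. lia.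
  have [A1 B1] := IH m ltac:(lia) m ltac:(lia).
  have [A2 B2] := IH m ltac:(lia) (m - 1) ltac:(lia).
  move: B1 B2; have -> : 2 * m + 1 - m = m + 1 by lia.
  have -> : 2 * m + 1 - (m - 1) = m + 2 by lia.
  move=> B1 B2.
  have F2 : g (m + 1) = f 2.
    by rewrite /g; have -> : 4 * (m + 1) = 2 + N by rewrite /N; lia.
  have F6 : g (m + 2) = f 6.
    by rewrite /g; have -> : 4 * (m + 2) = 6 + N by rewrite /N; lia.
  have F4 : g 1 = f 4 by [].
  have F0 : g 0 = f 0 by [].
  have S0 := HS 0; have S1 := HS 1; have S2 := HS 2; have S3 := HS 3.
  have I15 : f (1 + 4) <> f 1 by apply: Hinj => //; apply/negP => /dvdnP [q]; rewrite /N; case: q => [|q]; lia.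
  rewrite -!plusE /= in S0 S1 S2 S3 I15.
  move: F2 F6 F4 F0 S0 S1 S2 S3 I15 B1 B2 base g0.
  move: (g (m+1)) (g (m + 2)) (g 1) (g 0).
  rewrite /N; clear -m2.
  move=> a b c d F2 F6 F4 F0 S0 S1 S2 S3 I15 B1 B2 base g0.
  lia.
-
  have base : g 1 + 1 = N /\ g (2 * m) + 2 = N by lia.
  clear i10 i20 i21 d1 d2 Hc gl1 gl2.
  have IH : forall k, 1 <= k <= m -> forall j, 1 <= j <= k ->
      g j + 2 * j = N + 1 /\ g (2 * m + 1 - j) + 2 * j = N.
    elim=> [|k IHk] // Hk j Hj.
    case: (ltngtP j k.+1) => Hjk; [by apply: IHk; lia| by lia|].
    subst j.
    case: (posnP k) => [->|kpos].
      have E : 2 * m + 1 - 1 = 2 * m by lia.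
      by rewrite E; lia.
    have [A B] := IHk ltac:(lia) k ltac:(lia).
    have Hprev : g (2 * m + 2 - k) + 2 * k = N + 2.
      case: (ltngtP k 1) => Hk1; [lia| |].
      + have [_ C] := IHk ltac:(lia) (k - 1) ltac:(lia).
        move: C; have -> : 2 * m + 1 - (k - 1) = 2 * m + 2 - k by lia.
        move=> C; lia.
      + subst k; have -> : 2 * m + 2 - 1 = 2 * m + 1 by lia.
        by rewrite gper; lia.
    have Hkm1 : (1 < k /\ g (k - 1) + 2 * k = N + 3) \/ (k = 1 /\ g (k - 1) = N).
      case: (ltngtP k 1) => Hk1; [lia| |].
      + have [C _] := IHk ltac:(lia) (k - 1) ltac:(lia). left; lia.
      + subst k; rewrite /= g0; right; lia.
    have E1 : 2 * m + 1 - k.+1 = 2 * m - k by lia.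
    rewrite E1.
    have n1 := gnear k. rewrite addn1 in n1.
    have n2 := gnear (2 * m - k).
    have E2 : 2 * m - k + 1 = 2 * m + 1 - k by lia.
    rewrite E2 in n2.
    have j1 := ginj (k) (2 * m - k) ltac:(clear -Hk kpos m2; lia) ltac:(clear -Hk kpos m2; lia).
    have j3 := ginj2 (2 * m - k) (2 * m + 2 - k) ltac:(clear -Hk kpos m2; lia) ltac:(clear -Hk kpos m2; lia) ltac:(clear -Hk kpos m2; lia).
    have j4 := ginj (2 * m - k) (2 * m + 1 - k) ltac:(clear -Hk kpos m2; lia) ltac:(clear -Hk kpos m2; lia).
    have j5 := ginj (k.+1) (2 * m - k) ltac:(clear -Hk kpos m2; lia) ltac:(clear -Hk kpos m2; lia).
    have j6 := ginj (k.+1) (2 * m + 1 - k) ltac:(clear -Hk kpos m2; lia) ltac:(clear -Hk kpos m2; lia).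
    have j7 := ginj (k - 1) (k.+1) ltac:(clear -Hk kpos m2; lia) ltac:(clear -Hk kpos m2; lia).
    have j8 := ginj (k) (k.+1) ltac:(clear -Hk kpos m2; lia) ltac:(clear -Hk kpos m2; lia).
    have j9 := ginj2 (k.+1) (2 * m + 2 - k) ltac:(clear -Hk kpos m2; lia) ltac:(clear -Hk kpos m2; lia) ltac:(clear -Hk kpos m2; lia).
    have l1 := gl k.+1. have l2 := gl (2 * m - k).
    move: n1 n2 j1 j3 j4 j5 j6 j7 j8 j9 l1 l2 A B Hprev Hkm1.
    move: (g k.+1) (g (2 * m - k)) (g k) (g (k - 1)) (g (2 * m + 1 - k)) (g (2 * m + 2 - k)).
    rewrite /N; clear -kpos Hk.
    move=> X Y a b c d n1 n2 j1 j3 j4 j5 j6 j7 j8 j9 l1 l2 A B Hprev Hkm1.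
    have HX : X + 2 * k + 1 = 4 * m + 2.
      clear -n1 j6 j7 j8 j9 l1 A B Hprev Hkm1 kpos Hk. lia.
    clear -HX n2 j1 j3 j4 j5 l2 A B Hprev kpos Hk. lia.
  have [A1 _] := IH m ltac:(lia) m ltac:(lia).
  have [A2 _] := IH m ltac:(lia) (m - 1) ltac:(lia).
  have F0 : f (4 * m + 2) = f 0 by have := Hper 0; rewrite add0n /N.
  have F2 : f (4 * m - 2) = g (2 * m).
    rewrite /g -(Hper (4 * m - 2)); congr f; rewrite /N; lia.
  have F4 : f (4 * m - 4) = g (m - 1) by rewrite /g; congr f; lia.
  have F1 : f (4 * m) = g m by [].
  have S0 := HS (4 * m - 4); have S1 := HS (4 * m - 3); have S2 := HS (4 * m - 2); have S3 := HS (4 * m - 1).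
  have I15 : f (4 * m - 3 + 4) <> f (4 * m - 3) by apply: Hinj => //; apply/negP => /dvdnP [q]; rewrite /N; case: q => [|q]; lia.
  have E : forall a b, a = b -> f a = f b by move=> ? ? ->.
  have e1 := E (4 * m - 4 + 1) (4 * m - 3) ltac:(lia).
  have e2 := E (4 * m - 4 + 2) (4 * m - 2) ltac:(lia).
  have e3 := E (4 * m - 4 + 3) (4 * m - 1) ltac:(lia).
  have e4 := E (4 * m - 3 + 1) (4 * m - 2) ltac:(lia).
  have e5 := E (4 * m - 3 + 2) (4 * m - 1) ltac:(lia).
  have e6 := E (4 * m - 3 + 3) (4 * m) ltac:(lia).
  have e7 := E (4 * m - 2 + 1) (4 * m - 1) ltac:(lia).
  have e8 := E (4 * m - 2 + 2) (4 * m) ltac:(lia).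
  have e9 := E (4 * m - 2 + 3) (4 * m + 1) ltac:(lia).
  have e10 := E (4 * m - 1 + 1) (4 * m) ltac:(lia).
  have e11 := E (4 * m - 1 + 2) (4 * m + 1) ltac:(lia).
  have e12 := E (4 * m - 1 + 3) (4 * m + 2) ltac:(lia).
  have e13 := E (4 * m - 3 + 4) (4 * m + 1) ltac:(lia).
  rewrite e1 e2 e3 in S0; rewrite e4 e5 e6 in S1; rewrite e7 e8 e9 in S2;
    rewrite e10 e11 e12 in S3; rewrite e13 in I15.
  move: F0 F2 F4 F1 S0 S1 S2 S3 I15 A1 A2 base H0.
  move: (g (2 * m)) (g (m - 1)) (g m) (f (4 * m + 2)) (f (4 * m - 2)) (f (4 * m - 4)) (f (4 * m))
        (f (4 * m - 3)) (f (4 * m - 1)) (f (4 * m + 1)) (f 0).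
  rewrite /N; clear -m2 => *.
  lia.
Qed.
End Core.

Definition sg (m k : nat) : nat :=
  let q := k %/ 4 in
  match k %% 4 with 0 => 2 * q | 1 => 2 * q+2 * m+1 | 2 => 2 * m-2 * q-1 | _ => 4 * m-2 * q end.

Lemma sg_cases m k : k < 4 * m+2 -> exists q,
  [\/ k = 4 * q /\ sg m k = 2 * q, k = 4 * q+1 /\ sg m k = 2 * q+2 * m+1,
      [/\ k = 4 * q+2, sg m k + 2 * q+1 = 2 * m & q < m] |
      [/\ k = 4 * q+3, sg m k + 2 * q = 4 * m & q < m]].
Proof.
move=> kn; exists (k %/ 4).
have ek := divn_eq k 4.
have r4 : k %% 4 < 4 by rewrite ltn_pmod.
rewrite /sg; case E: (k %% 4) r4 ek => [|[|[|[|r]]]] // _ ek.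
- by constructor 1; lia.
- by constructor 2; lia.
- by constructor 3; split; lia.
- by constructor 4; split; lia.
Qed.

Arguments sg_cases {m k}.

Lemma sg_lt m k : k < 4 * m+2 -> sg m k < 4 * m+2.
Proof. by move=> kn; have [q [[]|[]|[]|[]]] := sg_cases kn; lia. Qed.

Lemma sg_inj m k l : k < 4 * m+2 -> l < 4 * m+2 -> sg m k = sg m l -> k = l.
Proof.
move=> kn ln; have [q Hq] := sg_cases kn; have [q' Hq'] := sg_cases ln.
by case: Hq => [[]|[]|[]|[]] *; case: Hq' => [[]|[]|[]|[]] *; lia.
Qed.

Lemma sgv0 m q : sg m (4 * q) = 2 * q.
Proof. by rewrite /sg mulnC modnMl mulnK. Qed.
Lemma sgv1 m q : sg m (4 * q+1) = 2 * q+2 * m+1.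
Proof.
rewrite /sg. have -> : (4 * q+1) %% 4 = 1 by lia.
by have -> : (4 * q+1) %/ 4 = q by lia.
Qed.
Lemma sgv2 m q : q < m -> sg m (4 * q+2) + 2 * q + 1 = 2 * m.
Proof.
move=> qm; rewrite /sg. have -> : (4 * q+2) %% 4 = 2 by lia.
have -> : (4 * q+2) %/ 4 = q by lia. lia.
Qed.
Lemma sgv3 m q : q < m -> sg m (4 * q+3) + 2 * q = 4 * m.
Proof.
move=> qm; rewrite /sg. have -> : (4 * q+3) %% 4 = 3 by lia.
have -> : (4 * q+3) %/ 4 = q by lia. lia.
Qed.

Arguments sgv2 {m q}.
Arguments sgv3 {m q}.

Lemma mS {n x} y : x < n -> x = y -> x %% n = y.
Proof. by move=> xn <-; rewrite modn_small. Qed.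
Lemma mW {n x} y : x = y + n -> y < n -> x %% n = y.
Proof. by move=> -> yn; rewrite modnDr modn_small. Qed.

Lemma wnd m i : 2 <= m -> i < 4 * m+2 ->
  8 * m+4 <= (sg m (i %% (4 * m+2))).+1 + (sg m ((i+1) %% (4 * m+2))).+1 + (sg m ((i+2) %% (4 * m+2))).+1
           + (sg m ((i+3) %% (4 * m+2))).+1 <= 8 * m+8.
Proof.
move=> m2 iN.
have [q Hq] := sg_cases iN.
case: Hq => [[Ei _]|[Ei _]|[Ei _ qm]|[Ei _ qm]]; subst i.
- case: (ltngtP q m) => qm; [|lia|].
  + rewrite (mS (4 * q)); [|lia|lia].
    rewrite (mS (4 * q+1)); [|lia|lia].
    rewrite (mS (4 * q+2)); [|lia|lia].
    rewrite (mS (4 * q+3)); [|lia|lia].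
    have := sgv2 qm; have := sgv3 qm; rewrite sgv0 sgv1; lia.
  + subst q.
    rewrite (mS (4 * m)); [|lia|lia].
    rewrite (mS (4 * m+1)); [|lia|lia].
    rewrite (mW (4 * 0)); [|lia|lia].
    rewrite (mW (4 * 0+1)); [|lia|lia].
    rewrite !sgv0 !sgv1; lia.
- case: (ltngtP q m) => qm; [|lia|].
  + rewrite (mS (4 * q+1)); [|lia|lia].
    rewrite (mS (4 * q+2)); [|lia|lia].
    rewrite (mS (4 * q+3)); [|lia|lia].
    rewrite (mS (4 * (q+1))); [|lia|lia].
    have := sgv2 qm; have := sgv3 qm; rewrite sgv0 sgv1; lia.
  + subst q.
    rewrite (mS (4 * m+1)); [|lia|lia].
    rewrite (mW (4 * 0)); [|lia|lia].
    rewrite (mW (4 * 0+1)); [|lia|lia].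
    rewrite (mW (4 * 0+2)); [|lia|lia].
    have := @sgv2 m 0 (ltn_trans (isT : 0 < 1) m2).
    rewrite !sgv0 !sgv1; lia.
- rewrite (mS (4 * q+2)); [|lia|lia].
  rewrite (mS (4 * q+3)); [|lia|lia].
  rewrite (mS (4 * (q+1))); [|lia|lia].
  rewrite (mS (4 * (q+1)+1)); [|lia|lia].
  have := sgv2 qm; have := sgv3 qm; rewrite sgv0 sgv1; lia.
- rewrite (mS (4 * q+3)); [|lia|lia].
  rewrite (mS (4 * (q+1))); [|lia|lia].
  rewrite (mS (4 * (q+1)+1)); [|lia|lia].
  case: (ltngtP (q+1) m) => qm'; [|lia|].
  + rewrite (mS (4 * (q+1)+2)); [|lia|lia].
    have := sgv2 qm'; have := sgv3 qm; rewrite !sgv0 !sgv1; lia.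
  + rewrite (mW (4 * 0)); [|lia|lia].
    have := sgv3 qm; rewrite !sgv0 !sgv1; lia.
Qed.

Definition Fof n (n0 : (0 < n)%N) (s : 'S_n) (t : nat) : nat :=
  (s (Ordinal (ltn_pmod t n0))).+1.

Arguments Fof {n}.

Lemma Feq n (n0 : (0 < n)%N) (s : 'S_n) a b :
  a %% n = b %% n -> Fof n0 s a = Fof n0 s b.
Proof. by move=> E; rewrite /Fof; congr (_.+1); congr (s _); apply: val_inj. Qed.

Lemma Wsum n (n0 : (0 < n)%N) (s : 'S_n) (i : 'I_n) :
  window_sum 4 s i = (Fof n0 s i + Fof n0 s (i+1) + Fof n0 s (i+2) + Fof n0 s (i+3))%N.
Proof.
rewrite /window_sum /pival !big_ord_recr big_ord0 /=.
rewrite add0n /Fof; congr (_ + _ + _ + _); congr (_.+1); congr (s _);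
  apply: val_inj => //=; by rewrite addn0.
Qed.

Local Open Scope ring_scope.

Lemma c_eq m : ((4 * (4 * m + 2).+1)%:R / 2%:R : rat) = (8 * m + 6)%:R.
Proof.
have -> : (4 * (4 * m + 2).+1 = (8 * m + 6) * 2)%N by lia.
by rewrite natrM mulfK.
Qed.

Lemma e1 m : ((8 * m + 6)%:R - 2%:R : rat) = (8 * m + 4)%:R.
Proof.
rewrite -natrB; last by lia.
by have -> : (8 * m + 6 - 2 = 8 * m + 4)%N by lia.
Qed.
Lemma e2 m : ((8 * m + 6)%:R + 2%:R : rat) = (8 * m + 8)%:R.
Proof. by rewrite -natrD; have -> : (8 * m + 6 + 2 = 8 * m + 8)%N by lia. Qed.

Lemma lower m (m2 : (2 <= m)%N) (s : 'S_(4 * m + 2)) : (2%:R : rat) <= disc_perm 4 s.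
Proof.
have n0 : (0 < 4 * m + 2)%N by lia.
rewrite leNgt; apply/negP => Hlt.
have HW (i : 'I_(4 * m + 2)) : (8 * m + 5 <= window_sum 4 s i <= 8 * m + 7)%N.
  have := le_lt_trans (le_bigmax _ _ i) Hlt.
  rewrite c_eq ltr_distl => /andP [H1 H2].
  have e1 : ((8 * m + 6)%:R - 2%:R : rat) = (8 * m + 4)%:R.
    rewrite -natrB; last by lia.
    by have -> : (8 * m + 6 - 2 = 8 * m + 4)%N by lia.
  have e2 : ((8 * m + 6)%:R + 2%:R : rat) = (8 * m + 8)%:R.
    by rewrite -natrD; have -> : (8 * m + 6 + 2 = 8 * m + 8)%N by lia.
  rewrite e1 ltr_nat in H1; rewrite e2 ltr_nat in H2.
  by apply/andP; split; lia.
have xlt : (4 * m + 1 < 4 * m + 2)%N by lia.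
pose x : 'I_(4 * m + 2) := Ordinal xlt.
pose p : nat := (s^-1)%g x.
have pn : (p < 4 * m + 2)%N by apply: ltn_ord.
apply: (core m (fun t => Fof n0 s (p + t)) m2) => /=.
- by move=> t; apply: Feq; rewrite addnA modnDr.
- move=> t d d0 nd; rewrite /Fof => /succn_inj /val_inj /perm_inj /(congr1 val) /= E.
  move: nd; rewrite /dvdn; apply/negP; rewrite negbK.
  have := eqn_modDl (p + t) d 0 (4 * m + 2).
  by rewrite addn0 mod0n -addnA E eqxx => <-.
- by move=> t; rewrite /Fof; apply: ltn_ord.
- rewrite addn0 /Fof.
  have -> : Ordinal (ltn_pmod p n0) = (s^-1)%g x by apply: val_inj; rewrite /= modn_small.
  rewrite permKV /=; lia.
- move=> t.
  have := HW (Ordinal (ltn_pmod (p + t) n0)); rewrite Wsum /=.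
  rewrite (@Feq _ n0 s ((p + t) %% (4 * m + 2)) (p + t)); last by rewrite modn_mod.
  rewrite (@Feq _ n0 s ((p + t) %% (4 * m + 2) + 1) (p + (t + 1))); last by rewrite modnDml addnA.
  rewrite (@Feq _ n0 s ((p + t) %% (4 * m + 2) + 2) (p + (t + 2))); last by rewrite modnDml addnA.
  rewrite (@Feq _ n0 s ((p + t) %% (4 * m + 2) + 3) (p + (t + 3))); last by rewrite modnDml addnA.
  by [].
Qed.


Lemma upper m (m2 : (2 <= m)%N) : exists s : 'S_(4 * m + 2), disc_perm 4 s <= 2%:R.
Proof.
have n0 : (0 < 4 * m + 2)%N by lia.
pose ff (i : 'I_(4 * m + 2)) : 'I_(4 * m + 2) := Ordinal (sg_lt m i (ltn_ord i)).
have ffi : injective ff.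
  move=> i j /(congr1 val) /= E; apply: val_inj.
  exact: sg_inj m i j (ltn_ord i) (ltn_ord j) E.
exists (perm ffi).
rewrite /disc_perm; apply: bigmax_le => // i _.
rewrite c_eq ler_distl Wsum /Fof !permE /=.
have := @wnd m i m2 (ltn_ord i).
move=> /andP [H1 H2]; rewrite e1 e2 !ler_nat.
by apply/andP; split; lia.
Qed.

Theorem proposition2p2 (m : nat) : (2 <= m)%N -> disc (4 * m + 2) 4 = 2%:R.
Proof.
move=> m2.
have [s0 Hs0] := upper m m2.
rewrite /disc.
case: (@arg_minP _ _ _ (1%g : 'S_(4 * m + 2)) xpredT (disc_perm 4) isT) => s _ Hmin.
apply/le_anti/andP; split; last exact: lower.
exact: le_trans (Hmin s0 isT) Hs0.
Qed.
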